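(* Let $A,G\in\mathbb{R}^{d\times d}$ be symmetric positive definite, let $u\in\mathbb{R}^d\setminus\{0\}$, and let $G_+=\mathrm{BFGS}(A,G,u)$. Let $\xi\ge1$ be a constant such that $\frac1\xi A\preceq G$ and $\theta(A,G,u)\le\xi$. Then $$\sigma(A,G)-\sigma(A,G_+)\ge\frac{1}{4\xi^2}\theta^2(A,G,u)-\ln\xi.$$
   Context: $\mathrm{BFGS}(A,G,u):=G-\frac{Guu^\top G}{u^\top Gu}+\frac{Auu^\top A}{u^\top Au}$; $\sigma(A,G):=\mathrm{Tr}(A^{-1}G)-d$; $\theta(A,G,u):=\left(\frac{u^\top (G-A)A^{-1}(G-A)u}{u^\top GA^{-1}Gu}\right)^{1/2}$. *)

(* Defs.v *)
From HB Require Import structures.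
From mathcomp Require Import all_boot all_order all_algebra.
From mathcomp Require Import all_classical all_reals all_analysis.
Set Implicit Arguments. Unset Strict Implicit. Unset Printing Implicit Defensive.
Import Order.TTheory GRing.Theory Num.Theory.
Local Open Scope ring_scope.

Section Defs.
Variable R : realType.
Variable d : nat.

Definition bform (M : 'M[R]_d) (x y : 'cV[R]_d) : R := (x^T *m M *m y) 0 0.

Definition symmetric_mx (M : 'M[R]_d) : Prop := M^T = M.

Definition posdef (M : 'M[R]_d) : Prop :=
  symmetric_mx M /\ forall x : 'cV[R]_d, x != 0 -> 0 < bform M x x.

Definition possemidef (M : 'M[R]_d) : Prop :=
  symmetric_mx M /\ forall x : 'cV[R]_d, 0 <= bform M x x.

Definition loewner_le (M N : 'M[R]_d) : Prop := possemidef (N - M).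

Definition BFGS (A G : 'M[R]_d) (u : 'cV[R]_d) : 'M[R]_d :=
  G - (bform G u u)^-1 *: (G *m u *m u^T *m G)
    + (bform A u u)^-1 *: (A *m u *m u^T *m A).

Definition sigma (A G : 'M[R]_d) : R := \tr (invmx A *m G) - d%:R.

Definition theta (A G : 'M[R]_d) (u : 'cV[R]_d) : R :=
  Num.sqrt (bform ((G - A) *m invmx A *m (G - A)) u u
            / bform (G *m invmx A *m G) u u).

End Defs.

(* Main.v *)
Set Warnings "-all".
Set Implicit Arguments. Unset Strict Implicit.
Require Import Defs.
From HB Require Import structures.
From mathcomp Require Import all_boot all_order all_algebra.
From mathcomp Require Import all_classical all_reals all_analysis.
From mathcomp Require Import ring lra.
Import Order.TTheory GRing.Theory Num.Theory.
Local Open Scope ring_scope.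

Section B.
Variable R : realType.
Variable d : nat.
Implicit Types (M N : 'M[R]_d) (x y z : 'cV[R]_d).

Lemma bformDM M N x y : bform (M + N) x y = bform M x y + bform N x y.
Proof. by rewrite /bform mulmxDr mulmxDl mxE. Qed.
Lemma bformNM M x y : bform (- M) x y = - bform M x y.
Proof. by rewrite /bform mulmxN mulNmx mxE. Qed.
Lemma bformBM M N x y : bform (M - N) x y = bform M x y - bform N x y.
Proof. by rewrite bformDM bformNM. Qed.
Lemma bformZM c M x y : bform (c *: M) x y = c * bform M x y.
Proof. by rewrite /bform -scalemxAr -scalemxAl mxE. Qed.
Lemma bformDl M x y z : bform M (x + y) z = bform M x z + bform M y z.
Proof. by rewrite /bform linearD /= !mulmxDl mxE. Qed.
Lemma bformDr M x y z : bform M z (x + y) = bform M z x + bform M z y.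
Proof. by rewrite /bform !mulmxDr mxE. Qed.
Lemma bformZl M c x y : bform M (c *: x) y = c * bform M x y.
Proof. by rewrite /bform linearZ /= -!scalemxAl mxE. Qed.
Lemma bformZr M c x y : bform M x (c *: y) = c * bform M x y.
Proof. by rewrite /bform -!scalemxAr mxE. Qed.
Lemma bform_mulr M N x y : bform M x (N *m y) = bform (M *m N) x y.
Proof. by rewrite /bform !mulmxA. Qed.
Lemma bform_mull M N x y : bform M (N *m x) y = bform (N^T *m M) x y.
Proof. by rewrite /bform trmx_mul !mulmxA. Qed.
Lemma bform_sym M x y : M^T = M -> bform M x y = bform M y x.
Proof.
move=> hM; rewrite /bform.
have -> : (x^T *m M *m y) 0 0 = ((x^T *m M *m y)^T) 0 0 by rewrite [RHS]mxE.
by rewrite !trmx_mul trmxK hM mulmxA.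
Qed.

Lemma posdef_unit M : posdef M -> M \in unitmx.
Proof.
case=> _ hp; rewrite unitmxE unitfE; apply/negP => /det0P [v v0 hv].
have : 0 < bform M v^T v^T by apply: hp; rewrite trmx_eq0.
by rewrite /bform trmxK hv mul0mx mxE ltxx.
Qed.

Lemma tr_mx1 (x y : 'cV[R]_d) : \tr (x *m y^T) = (y^T *m x) 0 0.
Proof. by rewrite mxtrace_mulC trace_mx11. Qed.
End B.

Lemma ln_ge (R : realType) (r : R) : 1 <= r -> 2 * (1 - r^-1) <= ln (r ^+ 2).
Proof.
move=> r1; have r0 : 0 < r by lra.
rewrite lnXn // mulr2n.
have : 1 - r^-1 <= ln r; last lra.
have ri : 0 < r^-1 by rewrite invr_gt0.
have := @le_ln1Dx R (r^-1 - 1) ltac:(lra).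
rewrite addrC subrK lnV ?posrE //; lra.
Qed.

Lemma key (R : realFieldType) (a g w r : R) :
  0 < a -> 0 < g -> 0 < w -> 1 <= r -> a <= r^+2 * g -> g^+2 <= a * w ->
  (4 * (r^+2)^+2)^-1 * ((w - 2 * g + a) / w) <= w / g - 1 + 2 * (1 - r^-1).
Proof.
move=> a0 g0 w0 r1 ha hg.
have r0 : 0 < r by lra.
have H1 : g <= r^+2 * w.
  have : g * g <= g * (r^+2 * w) by nra.
  by rewrite ler_pM2l.
have H2 : 0 <= 4 * r^+2 * w + (r^+2 - 2) * g by nra.
have H3 : 0 <= (r - 1)^+3 * (3 * r + 1) by apply: mulr_ge0; [apply: exprn_ge0|]; lra.
rewrite -subr_ge0.
have -> : w / g - 1 + 2 * (1 - r^-1) - (4 * (r^+2)^+2)^-1 * ((w - 2 * g + a) / w)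
  = (r * (g * w * ((r - 1)^+3 * (3 * r + 1)) + (r^+2 * w - g) * (4 * r^+2 * w + (r^+2 - 2) * g))
     + g * r * (r^+2 * g - a)) / (4 * r^+5 * w * g).
  by field; rewrite ?gt_eqF // ?pmulr_rgt0 ?exprn_gt0 //.
apply: divr_ge0; last by apply: ltW; rewrite !pmulr_rgt0 ?exprn_gt0.
have H4 : 0 <= r^+2 * w - g by lra.
have H5 : 0 <= r^+2 * g - a by lra.
apply: addr_ge0; last by apply: mulr_ge0 => //; apply: mulr_ge0; lra.
apply: mulr_ge0; first lra.
apply: addr_ge0; last by apply: mulr_ge0.
by apply: mulr_ge0 => //; apply: mulr_ge0; lra.
Qed.

Lemma key0 (R : realFieldType) (a g w r : R) :
  0 < a -> 0 < g -> 0 < w -> 1 <= r -> a <= r^+2 * g -> g^+2 <= a * w ->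
  0 <= w / g - 1 + 2 * (1 - r^-1).
Proof.
move=> a0 g0 w0 r1 ha hg.
have r0 : 0 < r by lra.
have H1 : g <= r^+2 * w.
  have : g * g <= g * (r^+2 * w) by nra.
  by rewrite ler_pM2l.
have -> : w / g - 1 + 2 * (1 - r^-1) = ((r^+2 * w - g) + g * (r - 1)^+2) / (r^+2 * g).
  by field; rewrite ?gt_eqF // ?pmulr_rgt0 ?exprn_gt0 //.
apply: divr_ge0; last by apply: ltW; rewrite !pmulr_rgt0 ?exprn_gt0.
apply: addr_ge0; [lra| apply: mulr_ge0; [lra|apply: sqr_ge0]].
Qed.

Theorem lemma7 (R : realType) (d : nat) (A G : 'M[R]_d) (u : 'cV[R]_d)
  (xi : R) :
  posdef A -> posdef G -> u != 0 -> 1 <= xi ->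
  loewner_le (xi^-1 *: A) G -> theta A G u <= xi ->
  sigma A G - sigma A (BFGS A G u)
    >= (4 * xi ^+ 2)^-1 * theta A G u ^+ 2 - ln xi.
Proof.
move=> hA hG u0 xi1 hL _.
have Au := posdef_unit hA.
have [hAs hAp] := hA; have [hGs hGp] := hG.
set a := bform A u u; set g := bform G u u.
set w := bform (G *m invmx A *m G) u u.
have a0 : 0 < a by apply: hAp.
have g0 : 0 < g by apply: hGp.
have hag : a <= xi * g.
  have := (proj2 hL) u; rewrite bformBM bformZM -/a -/g.
  have xi0 : 0 < xi by lra.
  move=> h; have : xi^-1 * a <= g by lra.
  by rewrite ler_pdivrMl.
set v := invmx A *m (G *m u).
have Auv : bform A u v = g.
  by rewrite /v bform_mulr bform_mulr mulmxV // mul1mx.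
have Avv : bform A v v = w.
  rewrite {2}/v bform_mulr bform_mulr mulmxV // mul1mx.
  rewrite bform_sym // /v !bform_mulr.
  by [].
have CS : g ^+ 2 <= a * w.
  set x := g *: u + (- a) *: v.
  have : 0 <= bform A x x.
    have [->|x0] := eqVneq x 0; first by rewrite /bform mulmx0 mxE.
    by apply: ltW; apply: hAp.
  rewrite /x !bformDl !bformDr !bformZl !bformZr -/a Auv Avv (bform_sym _ _ hAs) Auv.
  move=> h.
  have : 0 <= a * (a * w - g ^+ 2) by nra.
  rewrite pmulr_rge0 //; lra.
have w0 : 0 < w by nra.
have Hs : sigma A G - sigma A (BFGS A G u) = w / g - 1.
  rewrite /sigma /BFGS -/a -/g !(mulmxDr, mulmxBr, mulmxN) -!scalemxAr.
  have -> : invmx A *m (G *m u *m u^T *m G) = (invmx A *m G *m u) *m (G *m u)^T.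
    by rewrite trmx_mul hGs !mulmxA.
  have -> : invmx A *m (A *m u *m u^T *m A) = u *m (A *m u)^T.
    by rewrite trmx_mul hAs !mulmxA mulVmx // mul1mx.
  rewrite !(mxtraceD, mxtraceZ, linearB, linearN) /= !mxtraceZ !tr_mx1.
  have -> : ((G *m u)^T *m (invmx A *m G *m u)) 0 0 = w.
    by rewrite /w /bform trmx_mul hGs !mulmxA.
  have -> : ((A *m u)^T *m u) 0 0 = a by rewrite /a /bform trmx_mul hAs.
  rewrite mulVf ?gt_eqF //; field; rewrite gt_eqF //.
have Ht : bform ((G - A) *m invmx A *m (G - A)) u u = w - 2 * g + a.
  have -> : (G - A) *m invmx A *m (G - A) = G *m invmx A *m G - G - G + A.
    rewrite !(mulmxBl, mulmxBr) -[G *m invmx A *m A]mulmxA -[A *m invmx A *m A]mulmxA mulVmx // !mulmx1 mulmxV // mul1mx.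
    by rewrite opprB addrA [LHS]addrAC.
  rewrite bformDM !bformBM -/w -/g -/a; ring.
rewrite Hs /theta Ht -/w.
set r := Num.sqrt xi.
have xir : xi = r ^+ 2 by rewrite /r sqr_sqrtr //; lra.
have r1 : 1 <= r by rewrite /r -sqrtr1 ler_sqrt //; lra.
have hl := ln_ge r1.
rewrite xir in hag.
have [x0|x0] := leP 0 ((w - 2 * g + a) / w).
  rewrite sqr_sqrtr // xir.
  have := key a0 g0 w0 r1 hag CS; lra.
rewrite ltr0_sqrtr // expr0n /= mulr0 xir.
have := key0 a0 g0 w0 r1 hag CS; lra.
Qed.
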